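(* There exist Pauli Hamiltonians $H$, with $m$ (the number of groups of the sorted insertion grouping) arbitrarily large, such that sorted insertion produces a grouping $\mathcal{G}$ of $H$ with $m$ groups and there is another grouping $\mathcal{G}'$ of $H$ with $V(\mathcal{G})/V(\mathcal{G}')=\Theta(m)$, where for a grouping $\mathcal{G}=(G^{[1]},\dots,G^{[k]})$ and fixed total budget $M$, $V(\mathcal{G})=\min\{\sum_jS_j/M_j:\ M_j>0,\ \sum_jM_j=M\}=(\sum_j\sqrt{S_j})^2/M$ with $S_j=\sum_{i:P_i\in G^{[j]}}c_i^2$.
   Context: A Pauli Hamiltonian is $H=\sum_{i=1}^Nc_iP_i$ with real nonzero $c_i$ and distinct $n$-qubit Pauli strings. A grouping is a list of pairwise disjoint sets of mutually commuting Pauli terms of $H$ covering all terms. Sorted insertion: order the terms by decreasing $|c_i|$ and insert each in turn into the first existing group whose members all commute with it, creating a new group otherwise. $V(\mathcal{G})$ is the variance of the grouped energy estimator under optimal allocation of $M$ shots across groups in the state-independent model where each Pauli has variance $1$ and all covariances vanish (as for the maximally mixed state). *)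

(* Defs.v *)
From HB Require Import structures.
From mathcomp Require Import all_boot all_order all_algebra.
From mathcomp Require Import reals.
Set Implicit Arguments. Unset Strict Implicit. Unset Printing Implicit Defensive.
Import Order.TTheory GRing.Theory Num.Theory.
Local Open Scope ring_scope.

(* Single-qubit Pauli operators encoded as 'I_4 : 0 = I, 1 = X, 2 = Y, 3 = Z. *)
Definition pstring (n : nat) := {ffun 'I_n -> 'I_4}.

Definition pcommute (n : nat) (p q : pstring n) : bool :=
  ~~ odd #|[set k : 'I_n | [&& p k != 0%N :> nat, q k != 0%N :> nat & p k != q k]]|.

(* A Pauli Hamiltonian H = sum_{i < N} c i * P i is given by P : 'I_N -> pstring n
   (injective: distinct strings) and c : 'I_N -> R (nonzero). *)
Definition pauli_hamiltonian (R : realType) (n N : nat)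
  (P : 'I_N -> pstring n) (c : 'I_N -> R) : Prop :=
  injective P /\ (forall i, c i != 0).

Definition is_grouping (n N : nat) (P : 'I_N -> pstring n)
  (G : seq {set 'I_N}) : Prop :=
  [/\ (forall a b : nat, (a < size G)%N -> (b < size G)%N -> a != b ->
         [disjoint nth set0 G a & nth set0 G b]),
      (forall i : 'I_N, exists2 g, g \in G & i \in g) &
      (forall g, g \in G -> forall i j, i \in g -> j \in g -> pcommute (P i) (P j))].

Fixpoint si_insert (N : nat) (comm : 'I_N -> 'I_N -> bool) (x : 'I_N)
  (gs : seq (seq 'I_N)) : seq (seq 'I_N) :=
  match gs with
  | [::] => [:: [:: x]]
  | g :: gs' => if all (comm x) g then (x :: g) :: gs'
                else g :: si_insert comm x gs'
  end.

(* Sorted insertion: terms ordered by decreasing |c_i| (stable sort, ties broken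
   by index order), each inserted in turn. *)
Definition sorted_insertion (R : realType) (n N : nat)
  (P : 'I_N -> pstring n) (c : 'I_N -> R) : seq {set 'I_N} :=
  let order := sort (fun i j : 'I_N => `|c j| <= `|c i|) (enum 'I_N) in
  let gs := foldl (fun gs x => si_insert (fun i j => pcommute (P i) (P j)) x gs)
                  [::] order in
  map (fun g => [set i in g]) gs.

Definition group_weight (R : realType) (N : nat) (c : 'I_N -> R) (g : {set 'I_N}) : R :=
  \sum_(i in g) c i ^+ 2.

Definition Var (R : realType) (N : nat) (c : 'I_N -> R) (G : seq {set 'I_N}) (M : R) : R :=
  (\sum_(g <- G) Num.sqrt (group_weight c g)) ^+ 2 / M.

(* Main.v *)
Require Import Defs.
From HB Require Import structures.
From mathcomp Require Import all_boot all_order all_algebra.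
From mathcomp Require Import reals.
From mathcomp Require Import ring.
Import Order.TTheory GRing.Theory Num.Theory.
Local Open Scope ring_scope.

Definition o0 : 'I_4 := @Ordinal 4 0 isT.
Definition o1 : 'I_4 := @Ordinal 4 1 isT.
Definition o3 : 'I_4 := @Ordinal 4 3 isT.

Definition PP (m N : nat) (i : 'I_N) : pstring m :=
  [ffun k : 'I_m => if odd i then (if (val k == (val i)./2)%N then o0 else o1)
                   else (if (val k == (val i)./2)%N then o3 else o0)].

Arguments PP m {N} i.

Lemma PPval m N (i : 'I_N) (k : 'I_m) : val (PP m i k) =
  (if odd i then (if (val k == (val i)./2)%N then 0 else 1)
   else (if (val k == (val i)./2)%N then 3 else 0))%N.
Proof. by rewrite ffunE; case: (odd i); case: eqP. Qed.

Lemma card_set_eq m (b : bool) (a : nat) : (a < m)%N ->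
  #|[set k : 'I_m | b && (val k == a)]| = b.
Proof.
move=> Ha; case: b.
  have -> : [set k : 'I_m | true && (val k == a)] = [set Ordinal Ha].
    by apply/setP => k; rewrite !inE -val_eqE.
  by rewrite cards1.
have -> : [set k : 'I_m | false && (val k == a)] = set0.
  by apply/setP => k; rewrite !inE.
by rewrite cards0.
Qed.

Lemma PPcomm m N (i j : 'I_N) : (N <= m.*2)%N ->
  pcommute (PP m i) (PP m j) = ~~ ((odd i != odd j) && ((val i)./2 != (val j)./2)).
Proof.
move=> HN.
have Hi : ((val i)./2 < m)%N by rewrite ltn_half_double (leq_trans (ltn_ord i)).
have Hj : ((val j)./2 < m)%N by rewrite ltn_half_double (leq_trans (ltn_ord j)).
rewrite /pcommute.
set b := (odd i != odd j) && ((val i)./2 != (val j)./2).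
set a := if odd i then (val j)./2 else (val i)./2.
have Ha : (a < m)%N by rewrite /a; case: (odd i).
have -> : [set k : 'I_m | [&& (PP m i k != 0%N :> nat), (PP m j k != 0%N :> nat)
                & PP m i k != PP m j k]] = [set k : 'I_m | b && (val k == a)].
  apply/setP => k; rewrite !inE -val_eqE !PPval /b /a.
  move: (odd i) (odd j) (val k) ((val i)./2) ((val j)./2) => p q x u v.
  case: p; case: q => /=; case: (eqVneq x u) => [Exu|nxu];
  case: (eqVneq x v) => [Exv|nxv]; case: (eqVneq u v) => [Euv|nuv] //=.
  all: try subst.
  all: try by rewrite eqxx in nxu.
  all: try by rewrite eqxx in nxv.
  all: try by rewrite eqxx in nuv.
by rewrite (@card_set_eq m b a Ha); case: b.
Qed.

Lemma si_new (N : nat) (comm : 'I_N -> 'I_N -> bool) x gs :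
  (forall g, g \in gs -> ~~ all (comm x) g) -> si_insert comm x gs = rcons gs [:: x].
Proof.
elim: gs => [//|g gs IH] H /=.
rewrite (negbTE (H g (mem_head _ _))) IH // => g' Hg'.
by apply: H; rewrite inE Hg' orbT.
Qed.

Lemma si_last (N : nat) (comm : 'I_N -> 'I_N -> bool) x gs g0 :
  (forall g, g \in gs -> ~~ all (comm x) g) -> all (comm x) g0 ->
  si_insert comm x (rcons gs g0) = rcons gs (x :: g0).
Proof.
elim: gs => [|g gs IH] H H0 /=; first by rewrite H0.
rewrite (negbTE (H g (mem_head _ _))) IH // => g' Hg'.
by apply: H; rewrite inE Hg' orbT.
Qed.

Section Constr.
Variable m' : nat.
Local Notation m := m'.+1.
Local Notation N := (m'.*2).+2.

Definition Pm : 'I_N -> pstring m := PP m (N:=N).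
Definition commm (i j : 'I_N) := pcommute (Pm i) (Pm j).
Definition Aj (j : nat) : 'I_N := inord j.*2.
Definition Cj (j : nat) : 'I_N := inord j.*2.+1.

Lemma comm_inord a b : (a < N)%N -> (b < N)%N ->
  commm (inord a) (inord b) = ~~ ((odd a != odd b) && (a./2 != b./2)).
Proof.
move=> Ha Hb; rewrite /commm /Pm PPcomm; last by rewrite doubleS.
have E1 : val (inord a : 'I_N) = a := inordK Ha.
have E2 : val (inord b : 'I_N) = b := inordK Hb.
by rewrite E1 E2 !inordK.
Qed.

Definition gsk (k : nat) := [seq [:: Cj j; Aj j] | j <- iota 0 k].

Lemma enum_inord : enum 'I_N = [seq inord i | i <- iota 0 N].
Proof.
rewrite -val_enum_ord -map_comp.
symmetry; rewrite -{2}(map_id (enum 'I_N)); apply: eq_map => i /=; exact: inord_val.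
Qed.

Lemma fold_inv k : (k <= m)%N ->
  foldl (fun gs x => si_insert commm x gs) [::] [seq inord i | i <- iota 0 k.*2]
  = gsk k.
Proof.
elim: k => [//|k IH] Hk.
have Hk' : (k < m)%N := Hk.
have H2k : (k.*2.+1 < N)%N by rewrite !ltnS leq_double -ltnS.
have H2k0 : (k.*2 < N)%N by apply: ltnW.
rewrite [k.+1.*2]doubleS -[k.*2.+2]addn2 iotaD map_cat foldl_cat IH; last exact: ltnW.
rewrite add0n /=.
have Hold : forall x, (x < k)%N -> (x.*2.+1 < N)%N /\ (x.*2 < N)%N.
  move=> x Hx; have Hx2 : (x.*2.+1 < N)%N.
    by rewrite !ltnS leq_double -ltnS (leq_trans _ Hk) // ltnW.
  by split => //; apply: ltnW.
have E1 : si_insert commm (inord k.*2) (gsk k) = rcons (gsk k) [:: inord k.*2].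
  apply: si_new.
  move=> g; rewrite /gsk => /mapP [j]; rewrite mem_iota add0n => /andP [_ Hj] ->.
  have [H1 H2] := Hold j Hj.
  rewrite /= comm_inord //= ?odd_double ?uphalf_double ?doubleK /=.
  by rewrite (gtn_eqF Hj).
rewrite E1 si_last; first last.
  rewrite /= andbT comm_inord //= ?odd_double ?uphalf_double ?doubleK /=.
  by rewrite eqxx.
- move=> g; rewrite /gsk => /mapP [j]; rewrite mem_iota add0n => /andP [_ Hj] ->.
  have [H1 H2] := Hold j Hj.
  rewrite /= !comm_inord //= ?odd_double ?uphalf_double ?doubleK /=.
  by rewrite (gtn_eqF Hj).
by rewrite /gsk -[k.+1]addn1 iotaD map_cat add0n /= cats1.
Qed.
End Constr.

Lemma sorted_all_true (T : Type) (r : rel T) (s : seq T) :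
  (forall x y, r x y) -> sorted r s.
Proof.
move=> H; case: s => //= x s; elim: s x => //= y s IH x.
by rewrite H IH.
Qed.

Lemma count_parity (b : bool) n :
  count (fun i => odd i == b) (iota 0 n.*2) = n.
Proof.
elim: n => [//|n IH].
rewrite doubleS -[n.*2.+2]addn2 iotaD count_cat IH add0n /= odd_double.
by clear IH; case: b => /=; rewrite ?addn0 ?addn1.
Qed.

Lemma card_parity (b : bool) n :
  #|[set i : 'I_(n.*2) | odd i == b]| = n.
Proof.
rewrite -sum1_card.
rewrite (eq_bigl (fun i : 'I_(n.*2) => odd i == b)); last by move=> i; rewrite inE.
by rewrite -(big_mkord (fun i => odd i == b) (fun _ => 1%N)) sum1_count /index_iota subn0 count_parity.
Qed.

Lemma SI_eq (R : realType) m' :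
  sorted_insertion (Pm m') (fun _ => 1 : R) = [seq [set i in g] | g <- gsk m' m'.+1].
Proof.
rewrite /sorted_insertion sorted_sort; first last.
- by apply: sorted_all_true.
- by move=> ? ? ? _ _.
congr (map _ _).
rewrite enum_inord.
have := @fold_inv m' m'.+1 (leqnn _).
by rewrite doubleS.
Qed.

Theorem lemma2 (R : realType) :
  exists k1 k2 : R, 0 < k1 /\ 0 < k2 /\
  forall m0 : nat, exists (n N : nat) (P : 'I_N -> pstring n) (c : 'I_N -> R),
    pauli_hamiltonian P c /\
    (m0 <= size (sorted_insertion P c))%N /\
    exists G' : seq {set 'I_N}, is_grouping P G' /\
      forall M : R, 0 < M ->
        k1 * (size (sorted_insertion P c))%:R
          <= Var c (sorted_insertion P c) M / Var c G' M
          <= k2 * (size (sorted_insertion P c))%:R.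
Proof.
exists (1/2), (1/2); split; first by rewrite divr_gt0.
split; first by rewrite divr_gt0.
move=> m0.
exists m0.+1, (m0.*2.+2), (Pm m0), (fun _ => 1 : R).
rewrite SI_eq !size_map size_iota.
have Hq : forall i : 'I_(m0.*2.+2), ((val i)./2 < m0.+1)%N.
  by move=> i; rewrite ltn_half_double doubleS ltn_ord.
have HN : (m0.*2.+2 <= m0.+1.*2)%N by rewrite doubleS.
split.
  split=> [i j H|i]; last by rewrite oner_eq0.
  have Ei := congr1 (fun f : pstring m0.+1 => val (f (Ordinal (Hq i)))) H.
  have Ej := congr1 (fun f : pstring m0.+1 => val (f (Ordinal (Hq j)))) H.
  move: Ei Ej; rewrite /Pm !PPval /= eqxx.
  move=> E1 E2; apply: val_inj; rewrite /= -(odd_double_half i) -(odd_double_half j).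
  move: E1 E2; move: (odd i) (odd j) ((val i)./2) ((val j)./2) => p q u v.
  case: p; case: q; case: (eqVneq u v) => [<-|nuv] //=;
  rewrite ?eqxx ?[v == u]eq_sym ?(negbTE nuv) //.
split; first by [].
exists [:: [set i : 'I_(m0.*2.+2) | odd i == false]; [set i : 'I_(m0.*2.+2) | odd i == true]].
split.
  split.
  - move=> [|[|a]] [|[|b]] //= _ _ _; rewrite -setI_eq0; apply/eqP/setP => i; rewrite !inE; by case: (odd i).
  - move=> i; exists (if odd i then [set i : 'I_(m0.*2.+2) | odd i == true] else [set i : 'I_(m0.*2.+2) | odd i == false]).
      by case: (odd i); rewrite !inE eqxx ?orbT.
    by case E: (odd i); rewrite inE E.
  - move=> g; rewrite !inE => /orP [] /eqP -> i j; rewrite !inE => /eqP Hi /eqP Hj;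
    by rewrite /Pm PPcomm // Hi Hj.
move=> M HM.
have W2 : forall j, (j < m0.+1)%N ->
    group_weight (fun=> 1 : R) [set i in [:: Cj m0 j; Aj m0 j]] = 2.
  move=> j Hj; rewrite /group_weight expr1n sumr_const cardsE.
  have B1 : (j.*2.+1 < m0.*2.+2)%N by rewrite !ltnS leq_double -ltnS.
  have B0 : (j.*2 < m0.*2.+2)%N by apply: ltnW.
  have/card_uniqP -> // : uniq [:: Cj m0 j; Aj m0 j].
  rewrite /= andbT inE; apply/eqP => /(congr1 val).
  have E1 : val (inord (j.*2.+1) : 'I_(m0.*2.+2)) = j.*2.+1 := inordK B1.
  have E0 : val (inord (j.*2) : 'I_(m0.*2.+2)) = j.*2 := inordK B0.
  by rewrite /Cj /Aj E1 E0 => /eqP; rewrite eqn_leq ltnn.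
have C : forall b, #|[set i : 'I_(m0.*2.+2) | odd i == b]| = m0.+1.
  by move=> b; exact: (card_parity b m0.+1).
have VS : Var (fun=> 1 : R) [seq [set i in g] | g <- gsk m0 m0.+1] M
    = (Num.sqrt 2 *+ m0.+1) ^+ 2 / M.
  rewrite /Var big_map /gsk big_map.
  rewrite (eq_big_seq (fun _ => Num.sqrt 2)); last first.
    by move=> j; rewrite mem_iota => /andP [_ Hj]; rewrite W2.
  by rewrite -[iota 0 m0.+1]/(index_iota 0 m0.+1) sumr_const_nat subn0.
have VG : Var (fun=> 1 : R) [:: [set i : 'I_(m0.*2.+2) | odd i == false];
                                [set i : 'I_(m0.*2.+2) | odd i == true]] M
    = (Num.sqrt (m0.+1)%:R + Num.sqrt (m0.+1)%:R) ^+ 2 / M.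
  by rewrite /Var !big_cons big_nil addr0 /group_weight expr1n !sumr_const !C.
rewrite VS VG.
have E : (Num.sqrt 2 *+ m0.+1) ^+ 2 / M /
         ((Num.sqrt (m0.+1)%:R + Num.sqrt (m0.+1)%:R) ^+ 2 / M) = 1 / 2 * (m0.+1)%:R.
  have h1 : (Num.sqrt 2 *+ m0.+1) ^+ 2 = 2 * (m0.+1)%:R ^+ 2 :> R.
    by rewrite -[Num.sqrt 2 *+ _]mulr_natr exprMn sqr_sqrtr // ler0n.
  have h2 : (Num.sqrt (m0.+1)%:R + Num.sqrt (m0.+1)%:R) ^+ 2 = 4 * (m0.+1)%:R :> R.
    rewrite -mulr2n -[_ *+ 2]mulr_natr exprMn sqr_sqrtr ?ler0n // mulrC.
    by congr (_ * _); rewrite -natrX.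
  rewrite h1 h2.
  have Mn : M != 0 by rewrite gt_eqF.
  have mn : (m0.+1)%:R != 0 :> R by rewrite pnatr_eq0.
  by field; rewrite Mn addrC natr1 mn.
by rewrite E lexx.
Qed.
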